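(* For every nonzero limit ordinal $\alpha$, the structure $\mathrm{WS}(\omega^\alpha,<,\psi)$ is interpretable in $\mathrm{HF}(\alpha,<)$.
   Context: $\psi$ on ordinals: $\psi(0)=\omega$; if $\beta=\omega^{\beta_1}+\dots+\omega^{\beta_n}$ in Cantor normal form ($n\ge1$, $\beta_1\ge\dots\ge\beta_n$), $\psi(\beta)=\omega^{\beta_1}+\dots+\omega^{\beta_{n-1}}+\omega^{\beta_n+1}$. $(\gamma,<,\psi)$ is the structure on the ordinals below $\gamma$ with the usual order and $\psi$ (restricted). For a structure $\mathfrak{A}$ with domain $X$, $\mathrm{WS}(\mathfrak{A})$ is the two-sorted structure consisting of $\mathfrak{A}$ plus a second sort of all finite subsets of $X$ with the membership relation. For a relational structure $\mathfrak{A}$ with domain $A$, $\mathrm{HF}(\mathfrak{A})$ has domain $A^+$, the least set with $A\times\{\omega\}\subseteq A^+$ and every finite subset of $A^+$ belonging to $A^+$ (pairs in the Kuratowski sense, ordinals von Neumann); atoms are the elements $\pi(a)=(a,\omega)$, $a\in A$; its signature is that of $\mathfrak{A}$ (each relation holding exactly on tuples of atoms $\pi(a_1),\dots,\pi(a_n)$ with $\mathfrak{A}\models P(a_1,\dots,a_n)$) plus a unary predicate $\mathrm{At}$ true exactly of atoms and a binary $\in$ with $x\in y$ iff $y$ is not an atom and $x$ is a set-theoretic element of $y$. A many-sorted structure $\mathfrak{M}$ is interpretable in $\mathfrak{N}$ if each sort of $\mathfrak{M}$ is assigned a sort of $\mathfrak{N}$ and an injection of the domain into it, such that the image of each domain and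 the image of each relation and of the graph of each function of $\mathfrak{M}$ is first-order definable in $\mathfrak{N}$. *)

(* Defs.v *)
From Stdlib Require Import List Sorting.Sorted Classes.RelationClasses ClassicalEpsilon.
Import ListNotations.
Set Implicit Arguments.

Section Defs.
Variable T : Type.
Variable lt : T -> T -> Prop.

Definition nonzero_limit_ordinal : Prop :=
  StrictOrder lt /\ (forall x y, lt x y \/ x = y \/ lt y x) /\ well_founded lt /\
  inhabited T /\ (forall x, exists y, lt x y).

Definition is_succ (b c : T) : Prop := lt b c /\ forall d, lt b d -> ~ lt d c.
Definition is_least (z : T) : Prop := forall x, ~ lt x z.

(* ---------- ordinals below omega^alpha, via Cantor normal form:
   the list [b1; ...; bn] (b1 >= ... >= bn, all < alpha) denotes
   omega^b1 + ... + omega^bn; the empty list denotes 0. *)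
Definition Ord : Type := { l : list T | Sorted (fun x y => ~ lt x y) l }.

Fixpoint cnf_lt (l m : list T) : Prop :=
  match l, m with
  | nil, nil => False
  | nil, _ :: _ => True
  | _ :: _, nil => False
  | x :: l', y :: m' => lt x y \/ (x = y /\ cnf_lt l' m')
  end.

Definition ord_lt (x y : Ord) : Prop := cnf_lt (proj1_sig x) (proj1_sig y).

(* m is the CNF of (ordinal denoted by l) + omega^c *)
Definition cnf_add_term (l : list T) (c : T) (m : list T) : Prop :=
  exists l1 l2, l = l1 ++ l2 /\ Forall (fun x => ~ lt x c) l1 /\
    Forall (fun x => lt x c) l2 /\ m = l1 ++ [c].

(* graph of psi: psi(0) = omega = omega^1;
   psi(omega^b1+...+omega^bn) = (omega^b1+...+omega^b(n-1)) + omega^(bn+1) *)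
Definition psi_graph (x y : Ord) : Prop :=
  (proj1_sig x = nil /\ exists z o, is_least z /\ is_succ z o /\ proj1_sig y = [o])
  \/ exists l' b c, proj1_sig x = l' ++ [b] /\ is_succ b c /\ cnf_add_term l' c (proj1_sig y).

Definition FinSet : Type := { S : Ord -> Prop | exists l : list Ord, forall x, S x <-> In x l }.

(* ---------- HF(alpha,<): hereditarily finite sets with atoms from T *)
Inductive tree : Type :=
| Atom : T -> tree
| Node : list tree -> tree.

Inductive eqv : tree -> tree -> Prop :=
| eqv_atom a : eqv (Atom a) (Atom a)
| eqv_node l m :
    (forall x, In x l -> exists y, In y m /\ eqv x y) ->
    (forall y, In y m -> exists x, In x l /\ eqv x y) ->
    eqv (Node l) (Node m).

Definition rep (t : tree) : tree := epsilon (inhabits t) (fun s => eqv s t).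

(* the domain A^+ of HF(alpha,<): eqv-classes, via canonical representatives *)
Definition hf : Type := { t : tree | rep t = t }.

Definition hf_At (x : hf) : Prop := exists a, proj1_sig x = Atom a.
Definition hf_lt (x y : hf) : Prop :=
  exists a b, proj1_sig x = Atom a /\ proj1_sig y = Atom b /\ lt a b.
Definition hf_in (x y : hf) : Prop :=
  exists l, proj1_sig y = Node l /\ exists t, In t l /\ eqv t (proj1_sig x).

Inductive form : Type :=
| FLt : nat -> nat -> form
| FAt : nat -> form
| FIn : nat -> nat -> form
| FEq : nat -> nat -> form
| FNot : form -> form
| FAnd : form -> form -> form
| FEx : form -> form.

Definition scons (x : hf) (e : nat -> hf) (n : nat) : hf :=
  match n with 0 => x | S k => e k end.

Fixpoint sat (e : nat -> hf) (f : form) : Prop :=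
  match f with
  | FLt i j => hf_lt (e i) (e j)
  | FAt i => hf_At (e i)
  | FIn i j => hf_in (e i) (e j)
  | FEq i j => e i = e j
  | FNot g => ~ sat e g
  | FAnd g h => sat e g /\ sat e h
  | FEx g => exists x, sat (scons x e) g
  end.

Definition definable1 (R : hf -> Prop) : Prop :=
  exists f, forall e, sat e f <-> R (e 0).
Definition definable2 (R : hf -> hf -> Prop) : Prop :=
  exists f, forall e, sat e f <-> R (e 0) (e 1).

Definition injective {A B : Type} (g : A -> B) : Prop := forall x y, g x = g y -> x = y.

Definition WS_interpretable_in_HF : Prop :=
  exists (f0 : Ord -> hf) (f1 : FinSet -> hf),
    injective f0 /\ injective f1 /\
    definable1 (fun y => exists x, y = f0 x) /\
    definable1 (fun y => exists S, y = f1 S) /\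
    definable2 (fun y z => exists x x', y = f0 x /\ z = f0 x' /\ ord_lt x x') /\
    definable2 (fun y z => exists x x', y = f0 x /\ z = f0 x' /\ psi_graph x x') /\
    definable2 (fun y z => exists x (S : FinSet), y = f0 x /\ z = f1 S /\ proj1_sig S x).

End Defs.

(* Main.v *)
Require Import Defs.
From Stdlib Require Import List Sorting.Sorted Classes.RelationClasses ClassicalEpsilon Classical FunctionalExtensionality PropExtensionality ProofIrrelevance Lia.
Import ListNotations.
Set Implicit Arguments.

Section HFA.
Variable T : Type.

Fixpoint tree_ind2 (P : tree T -> Prop) (HA : forall a, P (Atom a))
  (HN : forall l, (forall x, In x l -> P x) -> P (Node l)) (t : tree T) : P t :=
  match t with
  | Atom a => HA a
  | Node l => HN l ((fix go (l : list (tree T)) : forall x, In x l -> P x :=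
      match l with
      | nil => fun x (H : In x nil) => False_ind _ H
      | y :: l' => fun x H => match H with
                   | or_introl e => eq_ind y P (tree_ind2 P HA HN y) x e
                   | or_intror H' => go l' x H' end
      end) l)
  end.

Lemma eqv_refl : forall t : tree T, eqv t t.
Proof.
  induction t using tree_ind2.
  - constructor.
  - constructor; intros x Hx; exists x; auto.
Qed.

Lemma eqv_sym : forall t s : tree T, eqv t s -> eqv s t.
Proof.
  induction t as [a|l IH] using tree_ind2; intros s H; inversion H as [|l0 m A1 A2]; subst.
  - constructor.
  - constructor.
    + intros y Hy. destruct (A2 y Hy) as [x [Hx E]]. exists x; split; auto.
    + intros x Hx. destruct (A1 x Hx) as [y [Hy E]]. exists y; split; auto.
Qed.

Lemma eqv_trans : forall t s u : tree T, eqv t s -> eqv s u -> eqv t u.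
Proof.
  induction t as [a|l IH] using tree_ind2; intros s u H1 H2; inversion H1 as [|l0 m A1 A2]; subst.
  - exact H2.
  - inversion H2 as [|m0 n B1 B2]; subst. constructor.
    + intros x Hx. destruct (A1 x Hx) as [y [Hy E]]. destruct (B1 y Hy) as [z [Hz E']].
      exists z; split; eauto.
    + intros z Hz. destruct (B2 z Hz) as [y [Hy E]]. destruct (A2 y Hy) as [x [Hx E']].
      exists x; split; eauto.
Qed.

Lemma rep_eqv : forall t : tree T, eqv (rep t) t.
Proof.
  intro t. unfold rep. apply (epsilon_spec (inhabits t) (fun s => eqv s t)).
  exists t; apply eqv_refl.
Qed.

Lemma rep_eq : forall t s : tree T, eqv t s -> rep t = rep s.
Proof.
  intros t s H. unfold rep.
  assert (E : (fun u => eqv u t) = (fun u => eqv u s)).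
  { apply functional_extensionality; intro u; apply propositional_extensionality;
    split; intro; eauto using eqv_trans, eqv_sym. }
  rewrite E. f_equal. apply proof_irrelevance.
Qed.

Lemma rep_idem : forall t : tree T, rep (rep t) = rep t.
Proof. intro t; apply rep_eq, rep_eqv. Qed.

Definition mk (t : tree T) : hf T := exist _ (rep t) (rep_idem t).

Lemma hf_eq : forall x y : hf T, eqv (proj1_sig x) (proj1_sig y) -> x = y.
Proof.
  intros [x Hx] [y Hy] H; simpl in *.
  assert (x = y) by (rewrite <- Hx, <- Hy; apply rep_eq; auto).
  subst. f_equal. apply proof_irrelevance.
Qed.

Lemma mk_sig : forall x : hf T, mk (proj1_sig x) = x.
Proof. intro x. apply hf_eq. simpl. apply rep_eqv. Qed.

Lemma eqv_atom_inv : forall (a : T) t, eqv t (Atom a) -> t = Atom a.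
Proof. intros a t H; inversion H; auto. Qed.

Lemma eqv_node_inv : forall (l : list (tree T)) t, eqv t (Node l) -> exists m, t = Node m.
Proof. intros l t H; inversion H; eauto. Qed.

Definition atom (a : T) : hf T := mk (Atom a).

Lemma atom_sig : forall a, proj1_sig (atom a) = Atom a.
Proof. intro a. apply eqv_atom_inv, rep_eqv. Qed.

Lemma At_iff : forall x : hf T, hf_At x <-> exists a, x = atom a.
Proof.
  intro x; unfold hf_At; split; intros [a Ha]; exists a.
  - apply hf_eq. rewrite Ha, atom_sig. constructor.
  - subst; apply atom_sig.
Qed.

Lemma atom_At : forall a, hf_At (atom a).
Proof. intro a. apply At_iff; eauto. Qed.

Lemma atom_inj : forall a b, atom a = atom b -> a = b.
Proof.
  intros a b H. assert (E := f_equal (@proj1_sig _ _) H). rewrite !atom_sig in E.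
  inversion E; auto.
Qed.

Lemma in_notAt : forall z x : hf T, hf_in z x -> ~ hf_At x.
Proof.
  intros z x [l [Hl _]] [a Ha]. congruence.
Qed.

Lemma notAt_node : forall x : hf T, ~ hf_At x -> exists l, proj1_sig x = Node l.
Proof.
  intros x H. destruct (proj1_sig x) eqn:E.
  - exfalso; apply H; exists t; auto.
  - eauto.
Qed.

Lemma hf_ext : forall x y : hf T, ~ hf_At x -> ~ hf_At y ->
  (forall z, hf_in z x <-> hf_in z y) -> x = y.
Proof.
  intros x y Hx Hy H.
  destruct (notAt_node Hx) as [l Hl]. destruct (notAt_node Hy) as [m Hm].
  apply hf_eq. rewrite Hl, Hm. constructor.
  - intros t Ht. assert (hf_in (mk t) x).
    { exists l; split; auto. exists t; split; auto. apply eqv_sym, rep_eqv. }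
    apply H in H0. destruct H0 as [m' [Hm' [t' [Ht' E]]]]. rewrite Hm in Hm'; inversion Hm'; subst.
    exists t'; split; auto. apply eqv_sym. eapply eqv_trans; [exact E|]. apply rep_eqv.
  - intros t Ht. assert (hf_in (mk t) y).
    { exists m; split; auto. exists t; split; auto. apply eqv_sym, rep_eqv. }
    apply H in H0. destruct H0 as [l' [Hl' [t' [Ht' E]]]]. rewrite Hl in Hl'; inversion Hl'; subst.
    exists t'; split; auto. eapply eqv_trans; [exact E|]. apply rep_eqv.
Qed.

Definition setof (L : list (hf T)) : hf T := mk (Node (map (@proj1_sig _ _) L)).

Lemma setof_notAt : forall L, ~ hf_At (setof L).
Proof.
  intros L [a Ha]. unfold setof, mk in Ha; simpl in Ha.
  assert (E := rep_eqv (Node (map (@proj1_sig _ _) L))). rewrite Ha in E. inversion E.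
Qed.

Lemma setof_in : forall L z, hf_in z (setof L) <-> In z L.
Proof.
  intros L z. unfold hf_in, setof, mk; simpl.
  assert (E := rep_eqv (Node (map (@proj1_sig _ _) L))).
  destruct (eqv_node_inv E) as [m Hm]. rewrite Hm in E. inversion E as [|m0 l0 H1 H2]; subst.
  split.
  - intros [m' [Hm' [t [Ht Et]]]]. rewrite Hm in Hm'; inversion Hm'; subst.
    destruct (H1 t Ht) as [u [Hu Eu]]. apply in_map_iff in Hu. destruct Hu as [w [<- Hw]].
    assert (w = z) by (apply hf_eq; eauto using eqv_trans, eqv_sym). subst; auto.
  - intro Hz. exists m; split; auto.
    destruct (H2 (proj1_sig z)) as [t [Ht Et]]. apply in_map; auto.
    exists t; split; auto.
Qed.

Lemma hf_finite : forall x : hf T, ~ hf_At x -> exists L, forall z, hf_in z x <-> In z L.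
Proof.
  intros x Hx. destruct (notAt_node Hx) as [l Hl]. exists (map mk l). intro z.
  unfold hf_in. rewrite in_map_iff. split.
  - intros [l' [Hl' [t [Ht E]]]]. rewrite Hl in Hl'; inversion Hl'; subst.
    exists t; split; auto. rewrite <- (mk_sig z). apply hf_eq; simpl.
    rewrite (rep_eq E). apply eqv_refl.
  - intros [t [<- Ht]]. exists l; split; auto. exists t; split; auto.
    apply eqv_sym, rep_eqv.
Qed.

Lemma hf_wf : well_founded (@hf_in T).
Proof.
  assert (forall t (x : hf T), eqv (proj1_sig x) t -> Acc (@hf_in T) x).
  { induction t as [a|l IH] using tree_ind2; intros x Hx; constructor; intros z Hz.
    - destruct Hz as [l [Hl _]]. rewrite Hl in Hx. inversion Hx.
    - destruct Hz as [m [Hm [t [Ht E]]]]. rewrite Hm in Hx. inversion Hx as [|m0 l0 H1 H2]; subst.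
      destruct (H1 t Ht) as [t' [Ht' E']]. apply (IH t' Ht').
      eauto using eqv_trans, eqv_sym. }
  intro x. apply (H (proj1_sig x)). apply eqv_refl.
Qed.

End HFA.

Section DC.
Variable T : Type.
Variable lt : T -> T -> Prop.
Notation hf := (hf T).

Definition D (R : (nat -> hf) -> Prop) : Prop := exists f, forall e, sat lt e f <-> R e.

Definition upr (s : nat -> nat) (n : nat) : nat := match n with 0 => 0 | S k => S (s k) end.

Fixpoint ren (s : nat -> nat) (f : form) : form :=
  match f with
  | FLt i j => FLt (s i) (s j)
  | FAt i => FAt (s i)
  | FIn i j => FIn (s i) (s j)
  | FEq i j => FEq (s i) (s j)
  | FNot g => FNot (ren s g)
  | FAnd g h => FAnd (ren s g) (ren s h)
  | FEx g => FEx (ren (upr s) g)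
  end.

Lemma ren_sat : forall f s e, sat lt e (ren s f) <-> sat lt (fun n => e (s n)) f.
Proof.
  induction f; intros s e; simpl; try tauto.
  - rewrite IHf; tauto.
  - rewrite IHf1, IHf2; tauto.
  - split; intros [x Hx]; exists x.
    + rewrite IHf in Hx.
      replace (scons x (fun n => e (s n))) with (fun n => scons x e (upr s n)); auto.
      apply functional_extensionality; intros [|n]; reflexivity.
    + rewrite IHf.
      replace (fun n => scons x e (upr s n)) with (scons x (fun n => e (s n))); auto.
      apply functional_extensionality; intros [|n]; reflexivity.
Qed.

Lemma D_sub : forall R s, D R -> D (fun e => R (fun n => e (s n))).
Proof.
  intros R s [f Hf]. exists (ren s f). intro e. rewrite ren_sat. apply Hf.
Qed.

Lemma D_ext : forall R S, (forall e, R e <-> S e) -> D R -> D S.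
Proof. intros R S H [f Hf]; exists f; intro e; rewrite Hf; apply H. Qed.

Lemma D_and : forall A B, D A -> D B -> D (fun e => A e /\ B e).
Proof. intros A B [f Hf] [g Hg]; exists (FAnd f g); intro e; simpl; rewrite Hf, Hg; tauto. Qed.

Lemma D_not : forall A, D A -> D (fun e => ~ A e).
Proof. intros A [f Hf]; exists (FNot f); intro e; simpl; rewrite Hf; tauto. Qed.

Lemma D_or : forall A B, D A -> D B -> D (fun e => A e \/ B e).
Proof.
  intros A B HA HB. apply D_ext with (fun e => ~ (~ A e /\ ~ B e)).
  - intro; tauto.
  - apply D_not, D_and; apply D_not; auto.
Qed.

Lemma D_imp : forall A B, D A -> D B -> D (fun e => A e -> B e).
Proof.
  intros A B HA HB. apply D_ext with (fun e => ~ (A e /\ ~ B e)).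
  - intro; tauto.
  - apply D_not, D_and; auto. apply D_not; auto.
Qed.

Lemma D_iff : forall A B, D A -> D B -> D (fun e => A e <-> B e).
Proof.
  intros A B HA HB. apply D_ext with (fun e => (A e -> B e) /\ (B e -> A e)).
  - intro; tauto.
  - apply D_and; apply D_imp; auto.
Qed.

Lemma D_ex : forall (P : hf -> (nat -> hf) -> Prop),
  D (fun e => P (e 0) (fun n => e (S n))) -> D (fun e => exists x, P x e).
Proof.
  intros P [f Hf]. exists (FEx f). intro e; simpl. split; intros [x Hx]; exists x.
  - apply Hf in Hx. exact Hx.
  - apply Hf. exact Hx.
Qed.

Lemma D_all : forall (P : hf -> (nat -> hf) -> Prop),
  D (fun e => P (e 0) (fun n => e (S n))) -> D (fun e => forall x, P x e).
Proof.
  intros P H. apply D_ext with (fun e => ~ exists x, ~ P x e).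
  - intro e; split; intro H1.
    + intro x. apply NNPP. intro H2. apply H1; eauto.
    + intros [x Hx]; auto.
  - apply D_not. apply (D_ex (fun x e => ~ P x e)). apply D_not. exact H.
Qed.

Lemma D_in : forall i j, D (fun e => hf_in (e i) (e j)).
Proof. intros i j; exists (FIn i j); intro; simpl; tauto. Qed.
Lemma D_lt : forall i j, D (fun e => hf_lt lt (e i) (e j)).
Proof. intros i j; exists (FLt i j); intro; simpl; tauto. Qed.
Lemma D_At : forall i, D (fun e => hf_At (e i)).
Proof. intros i; exists (FAt i); intro; simpl; tauto. Qed.
Lemma D_eq : forall i j, D (fun e => e i = e j).
Proof. intros i j; exists (FEq i j); intro; simpl; tauto. Qed.
Lemma D_True : D (fun e => True).
Proof. apply D_ext with (fun e => e 0 = e 0). intro; tauto. apply D_eq. Qed.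

Lemma lift1 : forall P : hf -> Prop, D (fun e => P (e 0)) -> forall i, D (fun e => P (e i)).
Proof. intros P H i. exact (D_sub (fun _ => i) H). Qed.
Lemma lift2 : forall P : hf -> hf -> Prop, D (fun e => P (e 0) (e 1)) ->
  forall i j, D (fun e => P (e i) (e j)).
Proof. intros P H i j. exact (D_sub (fun n => match n with 0 => i | _ => j end) H). Qed.
Lemma lift3 : forall P : hf -> hf -> hf -> Prop, D (fun e => P (e 0) (e 1) (e 2)) ->
  forall i j k, D (fun e => P (e i) (e j) (e k)).
Proof. intros P H i j k. exact (D_sub (fun n => match n with 0 => i | 1 => j | _ => k end) H). Qed.

End DC.

Ltac dstep := 
  match goal with
  | |- D _ (fun e => @?A e /\ @?B e) => apply (@D_and _ _ A B)
  | |- D _ (fun e => @?A e \/ @?B e) => apply (@D_or _ _ A B)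
  | |- D _ (fun e => @?A e <-> @?B e) => apply (@D_iff _ _ A B)
  | |- D _ (fun e => ~ @?A e) => apply (@D_not _ _ A)
  | |- D _ (fun e => exists x, @?P x e) => apply (D_ex P); cbv beta
  | |- D _ (fun e => forall x : hf _, @?P x e) => apply (D_all P); cbv beta
  | |- D _ (fun e => @?A e -> @?B e) => apply (@D_imp _ _ A B)
  | |- D _ (fun e => True) => apply D_True
  | |- D _ (fun e => hf_in (e ?i) (e ?j)) => apply D_in
  | |- D _ (fun e => hf_lt _ (e ?i) (e ?j)) => apply D_lt
  | |- D _ (fun e => hf_At (e ?i)) => apply D_At
  | |- D _ (fun e => e ?i = e ?j) => apply D_eq
  end.


Section Test.
Variable T : Type.
Variable lt : T -> T -> Prop.
Goal D lt (fun e => forall x, hf_in x (e 0) -> exists y, hf_in y x /\ ~ hf_At y /\ hf_lt lt y (e 1)).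
Proof. repeat dstep. Qed.
End Test.

Lemma rev_case {A : Type} (l : list A) : l = [] \/ exists l' a, l = l' ++ [a].
Proof.
  destruct l as [|x l]; [left; auto|right].
  assert (x :: l <> []) by discriminate.
  destruct (exists_last H) as [l' [a E]]. eauto.
Qed.

Section Enc.
Variable T : Type.
Notation hf := (hf T).

Fixpoint encr (r : list T) : hf :=
  match r with nil => setof nil | b :: r' => setof [atom b; encr r'] end.
Definition enc (l : list T) : hf := encr (rev l).

Lemma enc_nil : enc [] = setof [].
Proof. reflexivity. Qed.
Lemma enc_snoc : forall l b, enc (l ++ [b]) = setof [atom b; enc l].
Proof. intros; unfold enc; rewrite rev_unit; reflexivity. Qed.
Lemma enc_notAt : forall l, ~ hf_At (enc l).
Proof. intro l; destruct (rev_case l) as [->|[l' [b ->]]]; [rewrite enc_nil|rewrite enc_snoc]; apply setof_notAt. Qed.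
Lemma enc_nil_in : forall z, ~ hf_in z (enc []).
Proof. intros z H. rewrite enc_nil, setof_in in H. destruct H. Qed.
Lemma enc_snoc_in : forall l b z, hf_in z (enc (l ++ [b])) <-> z = atom b \/ z = enc l.
Proof. intros. rewrite enc_snoc, setof_in. simpl. intuition. Qed.
Lemma atom_not_enc : forall a l, atom a <> enc l.
Proof. intros a l E. apply (enc_notAt l). rewrite <- E. apply atom_At. Qed.

Lemma enc_inj : forall l m, enc l = enc m -> l = m.
Proof.
  induction l as [|b l IH] using rev_ind; intros m E; destruct (rev_case m) as [->|[m' [d ->]]]; auto.
  - exfalso. apply (enc_nil_in (z:=atom d)). rewrite E, enc_snoc_in; auto.
  - exfalso. apply (enc_nil_in (z:=atom b)). rewrite <- E, enc_snoc_in; auto.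
  - assert (H1 : hf_in (atom b) (enc (m' ++ [d]))) by (rewrite <- E, enc_snoc_in; auto).
    assert (H2 : hf_in (enc l) (enc (m' ++ [d]))) by (rewrite <- E, enc_snoc_in; auto).
    rewrite enc_snoc_in in H1, H2.
    destruct H1 as [H1|H1]; [|exfalso; eapply atom_not_enc; eauto].
    destruct H2 as [H2|H2]; [exfalso; eapply atom_not_enc; eauto|].
    apply atom_inj in H1. apply IH in H2. subst; auto.
Qed.

Definition prefix (p l : list T) := exists s, l = p ++ s.

Definition prefixes (l : list T) := map (fun n => firstn n l) (seq 0 (S (length l))).

Lemma In_prefixes : forall p l, In p (prefixes l) <-> prefix p l.
Proof.
  intros p l; unfold prefixes; rewrite in_map_iff; split.
  - intros [n [<- _]]. exists (skipn n l). symmetry; apply firstn_skipn.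
  - intros [s ->]. exists (length p). split.
    + rewrite firstn_app, firstn_all. replace (length p - length p) with 0 by lia. simpl; apply app_nil_r.
    + apply in_seq. rewrite length_app; lia.
Qed.

Definition P (l : list T) : hf := setof (map enc (prefixes l)).

Lemma P_in : forall l u, hf_in u (P l) <-> exists p, prefix p l /\ u = enc p.
Proof.
  intros l u; unfold P; rewrite setof_in, in_map_iff. split.
  - intros [p [<- Hp]]. exists p; split; auto. apply In_prefixes; auto.
  - intros [p [Hp ->]]. exists p; split; auto. apply In_prefixes; auto.
Qed.

Lemma prefix_refl : forall l, prefix l l.
Proof. intro; exists []; rewrite app_nil_r; auto. Qed.
Lemma prefix_nil : forall l, prefix [] l.
Proof. intro; exists l; auto. Qed.
Lemma prefix_trans : forall a b c, prefix a b -> prefix b c -> prefix a c.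
Proof. intros a b c [s ->] [t ->]. exists (s ++ t). rewrite app_assoc; auto. Qed.
Lemma prefix_snoc : forall p l a, prefix p (l ++ [a]) -> prefix p l \/ p = l ++ [a].
Proof.
  intros p l a [s E]. destruct (rev_case s) as [->|[s' [a' ->]]].
  - right; rewrite app_nil_r in E; auto.
  - left. rewrite app_assoc in E. apply app_inj_tail in E. destruct E as [-> _]. exists s'; auto.
Qed.
Lemma prefix_len : forall p l, prefix p l -> length p <= length l.
Proof. intros p l [s ->]; rewrite length_app; lia. Qed.
Lemma prefix_antisym : forall p l, prefix p l -> prefix l p -> p = l.
Proof.
  intros p l [s E] H. apply prefix_len in H. subst. rewrite length_app in H.
  destruct s; [rewrite app_nil_r; auto| simpl in H; lia].
Qed.

Lemma P_notAt : forall l, ~ hf_At (P l).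
Proof. intro; apply setof_notAt. Qed.

Lemma P_inj : forall l m, P l = P m -> l = m.
Proof.
  intros l m E.
  assert (H1 : hf_in (enc l) (P m)) by (rewrite <- E; apply P_in; exists l; split; auto using prefix_refl).
  assert (H2 : hf_in (enc m) (P l)) by (rewrite E; apply P_in; exists m; split; auto using prefix_refl).
  apply P_in in H1, H2. destruct H1 as [p [Hp Ep]]. destruct H2 as [q [Hq Eq]].
  apply enc_inj in Ep, Eq. subst. apply prefix_antisym; auto.
Qed.

Lemma P_subs : forall l m, (forall t, hf_in t (P l) -> hf_in t (P m)) <-> prefix l m.
Proof.
  intros l m; split.
  - intro H. assert (H1 : hf_in (enc l) (P m)) by (apply H, P_in; exists l; split; auto using prefix_refl).
    apply P_in in H1. destruct H1 as [p [Hp Ep]]. apply enc_inj in Ep; subst; auto.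
  - intros H t Ht. apply P_in in Ht. destruct Ht as [p [Hp ->]]. apply P_in.
    exists p; split; eauto using prefix_trans.
Qed.

Definition isPair (u c w : hf) := ~ hf_At u /\ hf_in c u /\ hf_in w u /\ forall t, hf_in t u -> t = c \/ t = w.
Definition isEmpty (u : hf) := ~ hf_At u /\ forall t, ~ hf_in t u.
Definition subs (Z y : hf) := forall t, hf_in t Z -> hf_in t y.
Definition closedZ (Z : hf) := forall u, hf_in u Z -> forall c w, hf_At c -> ~ hf_At w -> isPair u c w -> hf_in w Z.

Lemma isEmpty_enc : forall l, isEmpty (enc l) <-> l = [].
Proof.
  intro l; split.
  - intros [_ H]. destruct (rev_case l) as [->|[l' [b ->]]]; auto.
    exfalso; apply (H (atom b)). apply enc_snoc_in; auto.
  - intros ->. split; [apply enc_notAt|apply enc_nil_in].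
Qed.

Lemma isPair_enc : forall p c w, hf_At c -> ~ hf_At w -> isPair (enc p) c w ->
  exists p' a, p = p' ++ [a] /\ c = atom a /\ w = enc p'.
Proof.
  intros p c w Hc Hw [_ [H1 [H2 _]]].
  destruct (rev_case p) as [->|[p' [a ->]]]; [exfalso; eapply enc_nil_in; eauto|].
  exists p', a. rewrite enc_snoc_in in H1, H2. split; auto.
  destruct H1 as [H1|H1]; [|subst; exfalso; apply (enc_notAt p'); auto].
  destruct H2 as [H2|H2]; [subst; exfalso; apply Hw, atom_At|]. auto.
Qed.

Lemma enc_isPair : forall p a, isPair (enc (p ++ [a])) (atom a) (enc p).
Proof.
  intros p a. split; [apply enc_notAt|]. rewrite !enc_snoc_in. intuition.
  apply enc_snoc_in in H; auto.
Qed.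

Lemma isPair_ext : forall u c w, isPair u c w -> u = setof [c; w].
Proof.
  intros u c w [Hu [H1 [H2 H3]]]. apply hf_ext; auto using setof_notAt.
  intro z; rewrite setof_in; simpl. split.
  - intro Hz; destruct (H3 z Hz); auto.
  - intros [<-|[<-|[]]]; auto.
Qed.

End Enc.

Lemma Sorted_snoc {A} (R : A -> A -> Prop) : forall l c, Sorted R l ->
  (forall l' d, l = l' ++ [d] -> R d c) -> Sorted R (l ++ [c]).
Proof.
  induction l as [|x l IH]; intros c Hs Hc; simpl.
  - constructor; auto.
  - inversion Hs; subst. constructor.
    + apply IH; auto. intros l' d E. apply (Hc (x :: l')). rewrite E; auto.
    + destruct l as [|y l]; simpl.
      * constructor. apply (Hc []). auto.
      * inversion H2; subst. constructor; auto.
Qed.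

Lemma Sorted_prefix {A} (R : A -> A -> Prop) : forall l s, Sorted R (l ++ s) -> Sorted R l.
Proof.
  induction l as [|x l IH]; intros s H; simpl in *; auto.
  inversion H; subst. constructor; eauto.
  destruct l; simpl in *; auto. inversion H3; subst; constructor; auto.
Qed.

Lemma Sorted_mid {A} (R : A -> A -> Prop) : forall p d c s, Sorted R (p ++ d :: c :: s) -> R d c.
Proof.
  induction p as [|x p IH]; intros d c s H; simpl in *.
  - inversion H; subst. inversion H3; auto.
  - inversion H; eauto.
Qed.

Section Img.
Variable T : Type.
Variable lt : T -> T -> Prop.
Notation hf := (hf T).
Notation sortedR := (Sorted (fun x y => ~ lt x y)).

Definition good (Y : hf) := ~ hf_At Y /\ forall u, hf_in u Y -> isEmpty u \/
  exists c w, hf_At c /\ ~ hf_At w /\ hf_in w Y /\ isPair u c w /\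
   (isEmpty w \/ exists d r, hf_At d /\ ~ hf_At r /\ isPair w d r /\ ~ hf_lt lt d c).

Definition imf0 (y : hf) := good y /\ exists u, hf_in u y /\ forall v, hf_in v y ->
  forall Z, ~ hf_At Z -> subs Z y -> hf_in u Z -> closedZ Z -> hf_in v Z.

Lemma hf_lt_atom : forall a b, hf_lt lt (atom a) (atom b) <-> lt a b.
Proof.
  intros a b; unfold hf_lt; rewrite !atom_sig. split.
  - intros [a' [b' [E1 [E2 H]]]]. inversion E1; inversion E2; subst; auto.
  - intro; eauto.
Qed.

Lemma hf_lt_At : forall x y, hf_lt lt x y -> hf_At x /\ hf_At y.
Proof. intros x y [a [b [E1 [E2 _]]]]. split; [exists a|exists b]; auto. Qed.

Lemma good_dec : forall Y, good Y -> forall u, hf_in u Y ->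
  exists l, sortedR l /\ u = enc l /\ forall p, prefix p l -> hf_in (enc p) Y.
Proof.
  intros Y [_ HY] u. induction u as [u IH] using (well_founded_induction (@hf_wf T)).
  intro Hu. destruct (HY u Hu) as [He | [c [w [Hc [Hw [HwY [Hp Hwc]]]]]]].
  - assert (Eu : u = enc []).
    { rewrite enc_nil. destruct He as [He1 He2]. apply hf_ext; auto using setof_notAt.
      intro z; rewrite setof_in; simpl. split; [apply He2|tauto]. }
    exists []. split; [constructor|]. split; auto.
    intros p [s E]. destruct p; [|discriminate]. rewrite <- Eu; exact Hu.
  - destruct (IH w (proj1 (proj2 (proj2 Hp))) HwY) as [l' [Hs [-> Hpre]]].
    destruct (proj1 (At_iff c) Hc) as [a ->].
    exists (l' ++ [a]). split; [|split].
    + apply Sorted_snoc; auto. intros l'' d ->.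
      destruct Hwc as [Hw0 | [d' [r [Hd' [Hr [Hp' Hlt]]]]]].
      * apply isEmpty_enc in Hw0. destruct l''; discriminate.
      * destruct (isPair_enc _ Hd' Hr Hp') as [p' [a' [E [-> _]]]].
        apply app_inj_tail in E. destruct E as [_ ->]. rewrite hf_lt_atom in Hlt. exact Hlt.
    + rewrite (isPair_ext Hp). rewrite enc_snoc. reflexivity.
    + intros p Hpp. destruct (prefix_snoc _ _ Hpp) as [H1 | ->]; auto.
      rewrite enc_snoc, <- (isPair_ext Hp). exact Hu.
Qed.

Definition f0 (x : Ord lt) : hf := P (proj1_sig x).

Lemma f0_inj : forall x y, f0 x = f0 y -> x = y.
Proof.
  intros [x Hx] [y Hy] E. unfold f0 in E; simpl in E. apply P_inj in E. subst.
  f_equal; apply proof_irrelevance.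
Qed.

Lemma closed_P : forall l : list T, closedZ (P l).
Proof.
  intros l u Hu c w Hc Hw Hp. apply P_in in Hu. destruct Hu as [p [Hpl ->]].
  destruct (isPair_enc _ Hc Hw Hp) as [p' [a [-> [_ ->]]]].
  apply P_in. exists p'; split; auto. eapply prefix_trans; [|exact Hpl]. exists [a]; auto.
Qed.

Lemma good_P : forall l, sortedR l -> good (P l).
Proof.
  intros l Hs. split; [apply P_notAt|]. intros u Hu. apply P_in in Hu. destruct Hu as [p [Hpl ->]].
  destruct (rev_case p) as [->|[p' [a ->]]].
  - left. apply isEmpty_enc; auto.
  - right. exists (atom a), (enc p'). split; [apply atom_At|]. split; [apply enc_notAt|].
    split; [apply P_in; exists p'; split; auto; eapply prefix_trans; [|exact Hpl]; exists [a]; auto|].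
    split; [apply enc_isPair|].
    destruct (rev_case p') as [->|[p'' [d ->]]].
    + left; apply isEmpty_enc; auto.
    + right. exists (atom d), (enc p''). split; [apply atom_At|]. split; [apply enc_notAt|].
      split; [apply enc_isPair|]. rewrite hf_lt_atom.
      destruct Hpl as [s ->]. apply (Sorted_mid (R := fun x y => ~ lt x y) p'' d a s).
      rewrite <- !app_assoc in Hs. exact Hs.
Qed.

Lemma closed_down : forall (Z : hf) (p s : list T), closedZ Z -> hf_in (enc (p ++ s)) Z -> hf_in (enc p) Z.
Proof.
  intros Z p s HZ. induction s as [|a s IH] using rev_ind; intro H.
  - rewrite app_nil_r in H; auto.
  - apply IH. rewrite app_assoc in H. apply (HZ _ H (atom a) (enc (p ++ s))).
    apply atom_At. apply enc_notAt. apply enc_isPair.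
Qed.

Lemma imf0_iff : forall y, imf0 y <-> exists x, y = f0 x.
Proof.
  intro y; split.
  - intros [Hg [u [Hu Hall]]]. destruct (good_dec Hg Hu) as [l [Hs [-> Hpre]]].
    exists (exist _ l Hs). unfold f0; simpl. apply hf_ext; [apply Hg|apply P_notAt|].
    intro z; split.
    + intro Hz. apply (Hall z Hz (P l)); auto using P_notAt, closed_P.
      * intros t Ht. apply P_in in Ht. destruct Ht as [p [Hp ->]]. auto.
      * apply P_in; exists l; split; auto using prefix_refl.
    + intro Hz. apply P_in in Hz. destruct Hz as [p [Hp ->]]. auto.
  - intros [[l Hs] ->]. unfold f0; simpl. split; [apply good_P; auto|].
    exists (enc l). split; [apply P_in; exists l; split; auto using prefix_refl|].
    intros v Hv Z HZa HZs HuZ HZc. apply P_in in Hv. destruct Hv as [p [[s ->] ->]].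
    eapply closed_down; eauto.
Qed.

End Img.

Section Lt.
Variable T : Type.
Variable lt : T -> T -> Prop.
Notation hf := (hf T).

Lemma prefix_cons : forall (x y : T) l m, prefix (x :: l) (y :: m) <-> x = y /\ prefix l m.
Proof.
  intros; split.
  - intros [s E]. inversion E; subst. split; auto. exists s; auto.
  - intros [-> [s ->]]. exists s; auto.
Qed.

Lemma cnf_lt_iff : forall l m, cnf_lt lt l m <->
  (prefix l m /\ l <> m) \/ exists p c d, prefix (p ++ [c]) l /\ prefix (p ++ [d]) m /\ lt c d.
Proof.
  induction l as [|x l IH]; intros [|y m]; simpl.
  - split; [tauto|]. intros [[_ H]|[p [c [d [[s E] _]]]]]; [auto|destruct p; discriminate].
  - split; [intros _; left; split; [apply prefix_nil|discriminate]|auto].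
  - split; [tauto|]. intros [[[s E] _]|[p [c [d [_ [[s E] _]]]]]]; [discriminate|destruct p; discriminate].
  - rewrite IH. split.
    + intros [H|[-> H]].
      * right. exists [], x, y. repeat split; auto; [exists l|exists m]; auto.
      * destruct H as [[H1 H2]|[p [c [d [H1 [H2 H3]]]]]].
        -- left. split; [apply prefix_cons; auto|]. intro E; inversion E; auto.
        -- right. exists (y :: p), c, d. simpl. rewrite !prefix_cons. auto.
    + intros [[H1 H2]|[p [c [d [H1 [H2 H3]]]]]].
      * apply prefix_cons in H1. destruct H1 as [-> H1]. right. split; auto.
        left; split; auto. intro; subst; auto.
      * destruct p as [|z p]; simpl in *.
        -- destruct H1 as [s E1]; destruct H2 as [t E2]. inversion E1; inversion E2; subst. left; auto.
        -- rewrite prefix_cons in H1, H2. destruct H1 as [-> H1]; destruct H2 as [-> H2].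
           right. split; auto. right.
           exists p, c, d; auto.
Qed.

Definition ltF (y z : hf) := (subs y z /\ y <> z) \/ exists u v w c d, hf_in u y /\ hf_in v z /\
  hf_At c /\ hf_At d /\ ~ hf_At w /\ isPair u c w /\ isPair v d w /\ hf_lt lt c d.

Lemma ltF_iff : forall l m, ltF (P l) (P m) <-> cnf_lt lt l m.
Proof.
  intros l m. rewrite cnf_lt_iff. unfold ltF, subs. rewrite P_subs. split.
  - intros [[H1 H2]|[u [v [w [c [d [Hu [Hv [Hc [Hd [Hw [Hp1 [Hp2 Hlt]]]]]]]]]]]]].
    + left; split; auto. intro; subst; auto.
    + right. apply P_in in Hu, Hv. destruct Hu as [p [Hp ->]]. destruct Hv as [q [Hq ->]].
      destruct (isPair_enc _ Hc Hw Hp1) as [p' [a [-> [-> ->]]]].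
      destruct (isPair_enc _ Hd Hw Hp2) as [q' [a' [-> [-> E]]]].
      apply enc_inj in E; subst. rewrite hf_lt_atom in Hlt. exists q', a, a'; auto.
  - intros [[H1 H2]|[p [c [d [H1 [H2 H3]]]]]].
    + left; split; auto. intro E; apply P_inj in E; auto.
    + right. exists (enc (p ++ [c])), (enc (p ++ [d])), (enc p), (atom c), (atom d).
      split; [apply P_in; eauto|]. split; [apply P_in; eauto|].
      split; [apply atom_At|]. split; [apply atom_At|]. split; [apply enc_notAt|].
      split; [apply enc_isPair|]. split; [apply enc_isPair|]. apply hf_lt_atom; auto.
Qed.

Definition isTop (u y : hf) := hf_in u y /\ forall s c, hf_in s y -> hf_At c -> ~ isPair s c u.

Lemma top_P : forall u l, isTop u (P l) <-> u = enc l.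
Proof.
  intros u l; split.
  - intros [Hu Ht]. apply P_in in Hu. destruct Hu as [p [[s Es] ->]].
    destruct s as [|a s]; [rewrite Es, app_nil_r; auto|].
    exfalso. apply (Ht (enc (p ++ [a])) (atom a)); auto using atom_At, enc_isPair.
    apply P_in. exists (p ++ [a]); split; auto. exists s. rewrite Es, <- app_assoc; auto.
  - intros ->. split; [apply P_in; exists l; split; auto using prefix_refl|].
    intros s c Hs Hc Hp. apply P_in in Hs. destruct Hs as [q [Hq ->]].
    destruct (isPair_enc _ Hc (enc_notAt l) Hp) as [q' [a [-> [_ E]]]].
    apply enc_inj in E; subst. apply prefix_len in Hq. rewrite length_app in Hq; simpl in Hq; lia.
Qed.

Definition isSucc (b c : hf) := hf_lt lt b c /\ forall d, hf_lt lt b d -> ~ hf_lt lt d c.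

Lemma isSucc_atom : forall b c, isSucc (atom b) (atom c) <-> is_succ lt b c.
Proof.
  intros b c; unfold isSucc, is_succ; rewrite hf_lt_atom; split; intros [H1 H2]; split; auto.
  - intros d Hd Hdc. apply (H2 (atom d)); apply hf_lt_atom; auto.
  - intros d Hd. destruct (hf_lt_At Hd) as [_ Hd']. apply At_iff in Hd'. destruct Hd' as [d' ->].
    rewrite hf_lt_atom in *. auto.
Qed.

End Lt.

Section Psi.
Variable T : Type.
Variable lt : T -> T -> Prop.
Notation hf := (hf T).

Definition psiF (y z : hf) :=
 ((forall u, hf_in u y -> isEmpty u) /\ exists v zz o zt, isTop v z /\ hf_At o /\ ~ hf_At zz /\
    isPair v o zz /\ isEmpty zz /\ hf_At zt /\ (forall a, ~ hf_lt lt a zt) /\ isSucc lt zt o)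
 \/ exists u b w, isTop u y /\ hf_At b /\ ~ hf_At w /\ isPair u b w /\
    exists q s c v, hf_in q y /\ hf_in s y /\ ~ hf_At q /\ isPair s b q /\
     (isEmpty q \/ exists d r, hf_At d /\ ~ hf_At r /\ isPair q d r /\ hf_lt lt b d) /\
     hf_At c /\ isSucc lt b c /\ isTop v z /\ isPair v c q.

Definition PS (l m : list T) :=
  (l = [] /\ exists z o, is_least lt z /\ is_succ lt z o /\ m = [o]) \/
  exists l' b c p, l = l' ++ [b] /\ is_succ lt b c /\ prefix (p ++ [b]) l /\
    (p = [] \/ exists p' d, p = p' ++ [d] /\ lt b d) /\ m = p ++ [c].

Lemma psiF_iff : forall l m, psiF (P l) (P m) <-> PS l m.
Proof.
  intros l m. unfold psiF, PS. split.
  - intros [[H1 [v [zz [o [zt [Hv [Ho [Hzz [Hp [He [Hzt [Hl Hs]]]]]]]]]]]] | [u [b [w [Hu [Hb [Hw [Hp [q [s [c [v [Hq [Hs [Hqa [Hps [Hqc [Hc [Hsc [Hv Hpv]]]]]]]]]]]]]]]]]]]].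
    + left. split.
      * apply isEmpty_enc. apply H1. apply P_in. exists l; split; auto using prefix_refl.
      * apply top_P in Hv; subst v. destruct (isPair_enc _ Ho Hzz Hp) as [m' [o' [-> [-> ->]]]].
        apply isEmpty_enc in He; subst m'. apply At_iff in Hzt. destruct Hzt as [z' ->].
        exists z', o'. split; [|split; auto; apply (isSucc_atom lt); auto].
        intros a Ha. apply (Hl (atom a)). apply (hf_lt_atom lt); auto.
    + right. apply top_P in Hu; subst u. destruct (isPair_enc _ Hb Hw Hp) as [l' [b' [-> [-> ->]]]].
      apply P_in in Hq, Hs. destruct Hq as [p [Hpl ->]]. destruct Hs as [t [Htl ->]].
      destruct (isPair_enc _ Hb Hqa Hps) as [t' [b'' [-> [E1 E2]]]].
      apply atom_inj in E1; apply enc_inj in E2; subst t' b''.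
      apply At_iff in Hc. destruct Hc as [c' ->]. rewrite (isSucc_atom lt) in Hsc.
      apply top_P in Hv; subst v. destruct (isPair_enc _ (atom_At c') Hqa Hpv) as [m' [c'' [-> [E1 E2]]]].
      apply atom_inj in E1; apply enc_inj in E2; subst m' c''.
      exists l', b', c', p. split; auto. split; auto. split; auto. split; auto.
      destruct Hqc as [Hqc | [d [r [Hd [Hr [Hpq Hlt]]]]]].
      * left; apply isEmpty_enc; auto.
      * right. destruct (isPair_enc _ Hd Hr Hpq) as [p' [d' [-> [-> _]]]].
        exists p', d'. split; auto. apply (hf_lt_atom lt); auto.
  - intros [[-> [z [o [Hz [Hs ->]]]]] | [l' [b [c [p [-> [Hs [Hpre [Hp ->]]]]]]]]].
    + left. split.
      * intros u Hu. apply P_in in Hu. destruct Hu as [p [[s E] ->]].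
        destruct p; [|discriminate]. apply isEmpty_enc; auto.
      * exists (enc [o]), (enc []), (atom o), (atom z).
        split; [apply top_P; auto|]. split; [apply atom_At|]. split; [apply enc_notAt|].
        split; [apply (enc_isPair [] o)|]. split; [apply isEmpty_enc; auto|].
        split; [apply atom_At|]. split; [|apply (isSucc_atom lt); auto].
        intros a Ha. destruct (hf_lt_At Ha) as [Ha' _]. apply At_iff in Ha'. destruct Ha' as [a' ->].
        apply (hf_lt_atom lt) in Ha. apply (Hz a'); auto.
    + right. exists (enc (l' ++ [b])), (atom b), (enc l').
      split; [apply top_P; auto|]. split; [apply atom_At|]. split; [apply enc_notAt|].
      split; [apply enc_isPair|].
      exists (enc p), (enc (p ++ [b])), (atom c), (enc (p ++ [c])).
      split; [apply P_in; exists p; split; auto; eapply prefix_trans; [|exact Hpre]; exists [b]; auto|].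
      split; [apply P_in; eauto|]. split; [apply enc_notAt|]. split; [apply enc_isPair|].
      split.
      * destruct Hp as [-> | [p' [d [-> Hd]]]]; [left; apply isEmpty_enc; auto|].
        right. exists (atom d), (enc p'). split; [apply atom_At|]. split; [apply enc_notAt|].
        split; [apply enc_isPair|]. apply (hf_lt_atom lt); auto.
      * split; [apply atom_At|]. split; [apply (isSucc_atom lt); auto|].
        split; [apply top_P; auto|]. apply enc_isPair.
Qed.

End Psi.

Lemma ss_app {X} (R : X -> X -> Prop) : forall A B a b, StronglySorted R (A ++ B) ->
  In a A -> In b B -> R a b.
Proof.
  induction A as [|x A IH]; intros B a b H Ha Hb; [destruct Ha|].
  inversion H; subst. destruct Ha as [->|Ha]; eauto.
  rewrite Forall_forall in H3. apply H3. apply in_or_app; auto.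
Qed.
Arguments ss_app {X} R A B a b _ _ _.

Section PsiL.
Variable T : Type.
Variable lt : T -> T -> Prop.
Hypothesis Hso : StrictOrder lt.
Hypothesis Htot : forall x y, lt x y \/ x = y \/ lt y x.
Notation R := (fun x y => ~ lt x y).

Lemma R_trans : forall x y z, R x y -> R y z -> R x z.
Proof.
  intros x y z H1 H2 H3. destruct (Htot x y) as [H|[->|H]]; auto.
  apply H2. eapply (StrictOrder_Transitive); eauto.
Qed.

Lemma irr : forall x, ~ lt x x.
Proof. intros x H. apply (StrictOrder_Irreflexive x H). Qed.

Lemma ltt : forall x y z, lt x y -> lt y z -> lt x z.
Proof. intros; eapply StrictOrder_Transitive; eauto. Qed.

Lemma psi_list : forall l' b c m, Sorted R (l' ++ [b]) -> is_succ lt b c ->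
  (cnf_add_term lt l' c m <-> exists p, prefix (p ++ [b]) (l' ++ [b]) /\
     (p = [] \/ exists p' d, p = p' ++ [d] /\ lt b d) /\ m = p ++ [c]).
Proof.
  intros l' b c m Hs [Hbc Hsucc].
  assert (SS : StronglySorted R (l' ++ [b])).
  { apply Sorted_StronglySorted; auto. intros x y z; apply R_trans. }
  split.
  - intros [l1 [l2 [-> [F1 [F2 ->]]]]]. exists l1. rewrite Forall_forall in F1, F2.
    split; [|split; auto].
    + destruct l2 as [|x l2'].
      * exists []. rewrite !app_nil_r. reflexivity.
      * assert (x = b).
        { assert (Rxb : R x b).
          { apply (ss_app R (l1 ++ x :: l2') [b] x b); simpl; auto. apply in_or_app; simpl; auto. }
          destruct (Htot x b) as [H|[H|H]]; [contradiction|auto|].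
          exfalso. apply (Hsucc x H). apply F2; simpl; auto. }
        subst x. exists (l2' ++ [b]). rewrite <- !app_assoc. reflexivity.
    + destruct (rev_case l1) as [->|[p' [d ->]]]; [left; auto|right].
      exists p', d. split; auto.
      assert (Rdb : R d b).
      { apply (ss_app R ((p' ++ [d]) ++ l2) [b] d b SS).
        apply in_or_app; left; apply in_or_app; simpl; auto. simpl; auto. }
      destruct (Htot d b) as [H|[H|H]]; [contradiction| |auto].
      subst d. exfalso. apply (F1 b); auto. apply in_or_app; simpl; auto.
  - intros [p [[s Es] [Hp ->]]].
    assert (Fp : Forall (fun x => ~ lt x c) p).
    { rewrite Forall_forall. intros x Hx Hxc.
      destruct Hp as [->|[p' [d [-> Hbd]]]]; [destruct Hx|].
      assert (Rxd : R x d).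
      { apply in_app_or in Hx. destruct Hx as [Hx|[->|[]]]; [|apply irr].
        rewrite Es in SS. rewrite <- !app_assoc in SS.
        apply (ss_app R p' ([d] ++ [b] ++ s) x d SS Hx). simpl; auto. }
      destruct (Htot x b) as [H|[->|H]].
      - apply Rxd. eapply ltt; eauto.
      - apply Rxd; auto.
      - apply (Hsucc x H Hxc). }
    destruct (rev_case s) as [->|[s' [b' ->]]].
    + rewrite app_nil_r in Es. apply app_inj_tail in Es. destruct Es as [-> _].
      exists p, []. split; [rewrite app_nil_r; auto|]. split; auto.
    + rewrite <- !app_assoc in Es. simpl in Es. rewrite app_comm_cons, app_assoc in Es.
      apply app_inj_tail in Es. destruct Es as [-> <-].
      exists p, (b :: s'). split; auto. split; auto. split; auto.
      rewrite Forall_forall. intros x [<-|Hx]; auto.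
      assert (R1 : R b x).
      { apply (ss_app R (p ++ [b]) (s' ++ [b]) b x). rewrite <- !app_assoc in SS. rewrite <- app_assoc. exact SS.
        apply in_or_app; simpl; auto. apply in_or_app; auto. }
      assert (R2 : R x b).
      { apply (ss_app R (p ++ b :: s') [b] x b). exact SS. apply in_or_app; simpl; auto. simpl; auto. }
      destruct (Htot x b) as [H|[->|H]]; [contradiction|auto|contradiction].
Qed.

End PsiL.

Section Fin.
Variable T : Type.
Variable lt : T -> T -> Prop.
Notation hf := (hf T).

Definition f1 (S : FinSet lt) : hf :=
  setof (map (@f0 T lt) (proj1_sig (constructive_indefinite_description _ (proj2_sig S)))).

Lemma f1_in : forall S y, hf_in y (f1 S) <-> exists x, proj1_sig S x /\ y = f0 x.
Proof.
  intros S y. unfold f1. destruct (constructive_indefinite_description _ (proj2_sig S)) as [L HL]; simpl.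
  rewrite setof_in, in_map_iff. split.
  - intros [x [<- Hx]]. exists x; split; auto. apply HL; auto.
  - intros [x [Hx ->]]. exists x; split; auto. apply HL; auto.
Qed.

Lemma f1_inj : forall S S', f1 S = f1 S' -> S = S'.
Proof.
  intros [S HS] [S' HS'] E.
  assert (S = S').
  { apply functional_extensionality; intro x; apply propositional_extensionality.
    assert (Hx := f1_in (exist _ S HS) (f0 x)). assert (Hx' := f1_in (exist _ S' HS') (f0 x)).
    rewrite E in Hx. simpl in *. split; intro H.
    - destruct (proj1 Hx' (proj2 Hx (ex_intro _ x (conj H eq_refl)))) as [y [Hy Ey]].
      apply f0_inj in Ey; subst; auto.
    - destruct (proj1 Hx (proj2 Hx' (ex_intro _ x (conj H eq_refl)))) as [y [Hy Ey]].
      apply f0_inj in Ey; subst; auto. }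
  subst. f_equal. apply proof_irrelevance.
Qed.

Definition imf1 (z : hf) := ~ hf_At z /\ forall y, hf_in y z -> imf0 lt y.

Lemma choose_list : forall L : list hf, (forall y, In y L -> exists x : Ord lt, y = f0 x) ->
  exists K : list (Ord lt), forall x, In x K <-> In (f0 x) L.
Proof.
  induction L as [|y L IH]; intro H.
  - exists []; simpl; tauto.
  - destruct (H y (or_introl eq_refl)) as [x0 ->].
    destruct IH as [K HK]; [intros; apply H; simpl; auto|].
    exists (x0 :: K). intro x; simpl. rewrite HK. split; intros [E|E]; auto.
    + left; subst; auto.
    + left; apply f0_inj; auto.
Qed.

Lemma imf1_iff : forall z, imf1 z <-> exists S, z = f1 S.
Proof.
  intro z; split.
  - intros [Hz Hall]. destruct (hf_finite Hz) as [L HL].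
    destruct (choose_list L) as [K HK].
    { intros y Hy. apply imf0_iff, Hall, HL; auto. }
    assert (HS : exists l, forall x : Ord lt, (fun x => hf_in (f0 x) z) x <-> In x l).
    { exists K. intro x; simpl. rewrite HK, HL; tauto. }
    exists (exist (fun S : Ord lt -> Prop => exists l, forall x, S x <-> In x l) _ HS). apply hf_ext; [exact Hz|apply setof_notAt|].
    intro y. rewrite f1_in. simpl. split.
    + intro Hy. destruct (proj1 (imf0_iff lt y) (Hall y Hy)) as [x ->]. eauto.
    + intros [x [Hx ->]]; auto.
  - intros [S ->]. split; [apply setof_notAt|]. intros y Hy. apply f1_in in Hy.
    destruct Hy as [x [_ ->]]. apply imf0_iff; eauto.
Qed.

End Fin.

Section Defn.
Variable T : Type.
Variable lt : T -> T -> Prop.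
Notation hf := (hf T).

Lemma D_isPair : forall i j k, D lt (fun e => isPair (e i) (e j) (e k)).
Proof. apply (lift3 (fun a b c => isPair a b c)). unfold isPair. repeat dstep. Qed.
Lemma D_isEmpty : forall i, D lt (fun e => isEmpty (e i)).
Proof. apply (lift1 (fun a => isEmpty a)). unfold isEmpty. repeat dstep. Qed.
Lemma D_subs : forall i j, D lt (fun e => subs (e i) (e j)).
Proof. apply (lift2 (fun a b => subs a b)). unfold subs. repeat dstep. Qed.

Ltac dall := repeat first [dstep | apply D_isPair | apply D_isEmpty | apply D_subs].

Lemma D_closedZ : forall i, D lt (fun e => closedZ (e i)).
Proof. apply (lift1 (fun a => closedZ a)). unfold closedZ. dall. Qed.
Lemma D_good : forall i, D lt (fun e => good lt (e i)).
Proof. apply (lift1 (fun a => good lt a)). unfold good. dall. Qed.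
Lemma D_imf0 : forall i, D lt (fun e => imf0 lt (e i)).
Proof. apply (lift1 (fun a => imf0 lt a)). unfold imf0. dall; first [apply D_good | apply D_closedZ]. Qed.
Lemma D_isTop : forall i j, D lt (fun e => isTop (e i) (e j)).
Proof. apply (lift2 (fun a b => isTop a b)). unfold isTop. dall. Qed.
Lemma D_isSucc : forall i j, D lt (fun e => isSucc lt (e i) (e j)).
Proof. apply (lift2 (fun a b => isSucc lt a b)). unfold isSucc. dall. Qed.
Lemma D_ltF : forall i j, D lt (fun e => ltF lt (e i) (e j)).
Proof. apply (lift2 (fun a b => ltF lt a b)). unfold ltF. dall. Qed.
Lemma D_psiF : forall i j, D lt (fun e => psiF lt (e i) (e j)).
Proof. apply (lift2 (fun a b => psiF lt a b)). unfold psiF.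
  repeat first [dstep | apply D_isPair | apply D_isEmpty | apply D_subs | apply D_isTop | apply D_isSucc]. Qed.
Lemma D_imf1 : forall i, D lt (fun e => imf1 lt (e i)).
Proof. apply (lift1 (fun a => imf1 lt a)). unfold imf1. repeat first [dstep | apply D_imf0]. Qed.

End Defn.

Theorem lemma15 (T : Type) (lt : T -> T -> Prop) :
  nonzero_limit_ordinal lt -> WS_interpretable_in_HF lt.
Proof.
  intros [Hso [Htot _]].
  exists (@f0 T lt), (@f1 T lt).
  split; [intros x y; apply f0_inj|].
  split; [intros x y; apply f1_inj|].
  split.
  { apply (D_ext (R := fun e => imf0 lt (e 0))); [|apply D_imf0].
    intro e. apply imf0_iff. }
  split.
  { apply (D_ext (R := fun e => imf1 lt (e 0))); [|apply D_imf1].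
    intro e. apply imf1_iff. }
  split.
  { apply (D_ext (R := fun e => imf0 lt (e 0) /\ imf0 lt (e 1) /\ ltF lt (e 0) (e 1))).
    2: { apply D_and; [apply D_imf0|]. apply D_and; [apply D_imf0|apply D_ltF]. }
    intro e. split.
    - intros [H1 [H2 H3]]. apply imf0_iff in H1, H2. destruct H1 as [x Ex]. destruct H2 as [x' Ex'].
      rewrite Ex, Ex' in H3. exists x, x'. split; auto. split; auto. unfold ord_lt. apply ltF_iff. exact H3.
    - intros [x [x' [-> [-> H]]]]. split; [apply imf0_iff; eauto|]. split; [apply imf0_iff; eauto|].
      apply ltF_iff. exact H. }
  split.
  { apply (D_ext (R := fun e => imf0 lt (e 0) /\ imf0 lt (e 1) /\ psiF lt (e 0) (e 1))).
    2: { apply D_and; [apply D_imf0|]. apply D_and; [apply D_imf0|apply D_psiF]. }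
    assert (K : forall x x' : Ord lt, psi_graph x x' <-> PS lt (proj1_sig x) (proj1_sig x')).
    { intros [l Hl] [m Hm]. unfold psi_graph, PS; simpl. split.
      - intros [H|[l' [b [c [-> [Hs Ha]]]]]]; [left; exact H|right].
        apply (psi_list Hso Htot l' m Hl Hs) in Ha. destruct Ha as [p [H1 [H2 H3]]].
        exists l', b, c, p. auto.
      - intros [H|[l' [b [c [p [-> [Hs [H1 [H2 H3]]]]]]]]]; [left; exact H|right].
        exists l', b, c. split; auto. split; auto.
        apply (psi_list Hso Htot l' m Hl Hs). eauto. }
    intro e. split.
    - intros [H1 [H2 H3]]. apply imf0_iff in H1, H2. destruct H1 as [x Ex]. destruct H2 as [x' Ex'].
      rewrite Ex, Ex' in H3. exists x, x'. split; auto. split; auto. apply K. apply psiF_iff. exact H3.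
    - intros [x [x' [-> [-> H]]]]. split; [apply imf0_iff; eauto|]. split; [apply imf0_iff; eauto|].
      apply psiF_iff, K. exact H. }
  { apply (D_ext (R := fun e => imf0 lt (e 0) /\ imf1 lt (e 1) /\ hf_in (e 0) (e 1))).
    2: { apply D_and; [apply D_imf0|]. apply D_and; [apply D_imf1|apply D_in]. }
    intro e. split.
    - intros [H1 [H2 H3]]. apply imf0_iff in H1. apply imf1_iff in H2.
      destruct H1 as [x Ex]. destruct H2 as [S ES]. exists x, S. split; auto. split; auto.
      rewrite Ex, ES in H3. apply f1_in in H3. destruct H3 as [y [Hy Ey]].
      apply f0_inj in Ey; subst; auto.
    - intros [x [S [-> [-> H]]]]. split; [apply imf0_iff; eauto|]. split; [apply imf1_iff; eauto|].
      apply f1_in; eauto. }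
Qed.
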